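(* Fix $n\in\mathbb{N}$, points $x_1,\dots,x_n$, $\varepsilon_n>0$, a continuous function $V:\mathbb{R}\to[0,\infty)$ and weights $W_{ij}\geq0$ ($i,j=1,\dots,n$). For $p\geq1$ and $u:\{x_1,\dots,x_n\}\to\mathbb{R}$ define \[ \tilde{\mathcal{G}}_n^{(p)}(u)=\Big[\frac{1}{\varepsilon_nn^2}\sum_{i,j=1}^nW_{ij}^p|u(x_i)-u(x_j)|^p+\frac{1}{\varepsilon_n^pn}\sum_{i=1}^nV^p(u(x_i))\Big]^{1/p}, \] \[ \mathcal{G}_n^{(\infty)}(u)=\max\Big\{\max_{i,j}W_{ij}|u(x_i)-u(x_j)|,\ \frac{1}{\varepsilon_n}\max_iV(u(x_i))\Big\}. \] Then $\tilde{\mathcal{G}}_n^{(p)}$ $\Gamma$-converges to $\mathcal{G}_n^{(\infty)}$ as $p\to\infty$, with respect to pointwise convergence of functions on $\{x_1,\dots,x_n\}$ (i.e. convergence in $\mathbb{R}^n$).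
   Context: $\Gamma$-convergence as $p\to\infty$: for every $u$ and every family $u_p\to u$, $\mathcal{G}_n^{(\infty)}(u)\leq\liminf_{p\to\infty}\tilde{\mathcal{G}}_n^{(p)}(u_p)$, and for every $u$ there exists $u_p\to u$ with $\limsup_{p\to\infty}\tilde{\mathcal{G}}_n^{(p)}(u_p)\leq\mathcal{G}_n^{(\infty)}(u)$. *)

(* Defs.v *)
From HB Require Import structures.
From mathcomp Require Import all_boot all_order all_algebra.
From mathcomp Require Import all_classical all_reals all_analysis.
Set Implicit Arguments. Unset Strict Implicit. Unset Printing Implicit Defensive.
Import Order.TTheory GRing.Theory Num.Theory.
Local Open Scope ring_scope.

(* A function u on the vertex set {x_1,...,x_n} is represented by its vector of
   values u : 'I_n -> R, u i = u(x_i). *)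

Definition Gp (R : realType) (n : nat) (eps : R) (V : R -> R)
  (W : 'I_n -> 'I_n -> R) (p : R) (u : 'I_n -> R) : R :=
  ((eps * (n%:R ^+ 2))^-1 *
     (\sum_(i < n) \sum_(j < n) (W i j `^ p) * (`|u i - u j| `^ p))
   + ((eps `^ p) * n%:R)^-1 * (\sum_(i < n) (V (u i)) `^ p)) `^ (p^-1).

(* G_n^(infty)(u); all quantities are nonnegative, so 0 is a neutral element
   for the maxima (for n >= 1). *)
Definition Ginf (R : realType) (n : nat) (eps : R) (V : R -> R)
  (W : 'I_n -> 'I_n -> R) (u : 'I_n -> R) : R :=
  Num.max (\big[Num.max/0]_(i < n) \big[Num.max/0]_(j < n) (W i j * `|u i - u j|))
          (eps^-1 * \big[Num.max/0]_(i < n) V (u i)).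

(* Main.v *)
Require Import Defs.
From HB Require Import structures.
From mathcomp Require Import all_boot all_order all_algebra.
From mathcomp Require Import all_classical all_reals all_analysis.
From mathcomp Require Import ring lra.
Import Order.TTheory GRing.Theory Num.Theory.
Import numFieldNormedType.Exports.
Local Open Scope classical_set_scope.
Local Open Scope ring_scope.

Section Helpers.
Variable R : realType.

Lemma inv_cvg0 : (fun p : R => p^-1) @ +oo --> (0:R).
Proof.
apply/(@gtr0_cvgV0 R R (pinfty_nbhs R) _ id).
  by near=> p; near: p; apply: nbhs_pinfty_gt; rewrite num_real.
exact: cvg_id.
Unshelve. all: by end_near. Qed.

Lemma powR_inv_cvg1 (c : R) : 0 < c -> (fun p : R => c `^ p^-1) @ +oo --> (1:R).
Proof.
move=> c0.
have -> : (fun p : R => c `^ p^-1) = (fun p => expR (p^-1 * ln c)).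
  by apply/funext => p; rewrite /powR gt_eqF.
rewrite -expR0.
have h1 : (fun p : R => p^-1 * ln c) @ +oo --> (0:R).
  rewrite -(mul0r (ln c)).
  by apply: cvgM; [exact: inv_cvg0 | exact: cvg_cst].
exact: (cvg_comp _ _ h1 (@continuous_expR R 0)).
Qed.

Lemma liminf_ge (f g : R -> R) (l : R) : g @ +oo --> l ->
  (\forall p \near +oo, g p <= f p) ->
  (l%:E <= limf_einf (fun p => (f p)%:E) (pinfty_nbhs R))%E.
Proof.
move=> gl gf; rewrite limf_einfE; apply/lee_subgt0Pr => e e0.
have A : \forall p \near +oo, l - e < g p /\ g p <= f p.
  near=> p; split; last by near: p.
  by near: p; apply: (@cvgr_gt _ _ _ _ g l gl); rewrite ltrBlDr ltrDl.
apply: le_ereal_sup_tmp.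
exists (ereal_inf ((fun p => (f p)%:E) @` [set p | l - e < g p /\ g p <= f p])).
  by exists [set p | l - e < g p /\ g p <= f p].
apply: le_ereal_inf_tmp => _ [p [h1 h2] <-].
by rewrite -EFinB lee_fin; apply: ltW; apply: lt_le_trans h2.
Unshelve. all: by end_near. Qed.

Lemma limsup_le (f g : R -> R) (l : R) : g @ +oo --> l ->
  (\forall p \near +oo, f p <= g p) ->
  (limf_esup (fun p => (f p)%:E) (pinfty_nbhs R) <= l%:E)%E.
Proof.
move=> gl gf; rewrite limf_esupE; apply/lee_addgt0Pr => e e0.
have A : \forall p \near +oo, g p < l + e /\ f p <= g p.
  near=> p; split; last by near: p.
  by near: p; apply: (@cvgr_lt _ _ _ _ g l gl); rewrite ltrDl.
apply: ge_ereal_inf.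
exists (ereal_sup ((fun p => (f p)%:E) @` [set p | g p < l + e /\ f p <= g p])).
  by exists [set p | g p < l + e /\ f p <= g p].
apply: ge_ereal_sup => _ [p [h1 h2] <-].
by rewrite -EFinD lee_fin; apply: ltW; apply: le_lt_trans h1.
Unshelve. all: by end_near. Qed.

Lemma powR_lb (S c x p : R) : 0 < p -> 0 <= c -> 0 <= x -> c * x `^ p <= S ->
  c `^ p^-1 * x <= S `^ p^-1.
Proof.
move=> p0 c0 x0 hS.
have -> : c `^ p^-1 * x = (c * x `^ p) `^ p^-1.
  by rewrite powRM ?powR_ge0// -powRrM mulfV ?gt_eqF// powRr1.
apply: ge0_ler_powR => //; first by rewrite invr_ge0 ltW.
  by rewrite nnegrE mulr_ge0 ?powR_ge0.
by rewrite nnegrE (le_trans _ hS)// mulr_ge0 ?powR_ge0.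
Qed.

Lemma powR_ub (S c x p : R) : 0 < p -> 0 <= c -> 0 <= x -> 0 <= S ->
  S <= c * x `^ p -> S `^ p^-1 <= c `^ p^-1 * x.
Proof.
move=> p0 c0 x0 S0 hS.
have -> : c `^ p^-1 * x = (c * x `^ p) `^ p^-1.
  by rewrite powRM ?powR_ge0// -powRrM mulfV ?gt_eqF// powRr1.
apply: ge0_ler_powR => //; first by rewrite invr_ge0 ltW.
by rewrite nnegrE mulr_ge0 ?powR_ge0.
Qed.

Lemma powRVl (a p : R) : 0 < a -> (a^-1) `^ p = (a `^ p)^-1.
Proof.
move=> a0.
have h := @powRM R a^-1 a p; rewrite mulVf ?gt_eqF// powR1 in h.
have h' := h (ltW (eq_ind_r is_true a0 (invr_gt0 a))) (ltW a0).
have b0 : a `^ p != 0 by rewrite gt_eqF// powR_gt0.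
by rewrite -[LHS]mulr1 -(mulfV b0) mulrA -h' ?mul1r.
Qed.

Lemma sum_ge_term n (F : 'I_n -> R) i : (forall k, 0 <= F k) -> F i <= \sum_k F k.
Proof. by move=> F0; rewrite (bigD1 i) //= lerDl sumr_ge0. Qed.

Lemma aux1 (a x : R) n : 0 < a -> 0 <= x ->
  (a * n%:R ^+ 2)^-1 * ((x *+ n) *+ n) <= a^-1 * x.
Proof.
move=> a0 x0; case: n => [|n].
  rewrite !mulr0n mulr0; apply: mulr_ge0 => //; rewrite invr_ge0; exact: ltW.
rewrite -[x *+ n.+1 *+ n.+1]mulr_natr -[x *+ n.+1]mulr_natr.
have hn : (n.+1)%:R != 0 :> R by rewrite pnatr_eq0.
rewrite le_eqVlt; apply/orP; left; apply/eqP.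
have hn' : 1 + n%:R != 0 :> R by rewrite addrC natr1.
by field; rewrite gt_eqF //= ?hn ?hn'.
Qed.

Lemma aux2 (a x : R) n : 0 < a -> 0 <= x ->
  (a * n%:R)^-1 * ((a * x) *+ n) <= x.
Proof.
move=> a0 x0; case: n => [|n]; first by rewrite mulr0n mulr0.
rewrite -[_ *+ n.+1]mulr_natr.
have hn : (n.+1)%:R != 0 :> R by rewrite pnatr_eq0.
rewrite le_eqVlt; apply/orP; left; apply/eqP.
have hn' : 1 + n%:R != 0 :> R by rewrite addrC natr1.
field.
by rewrite hn' gt_eqF.
Qed.

End Helpers.
Arguments sum_ge_term {R n}.
Arguments aux1 {R a x} n.
Arguments aux2 {R a x} n.

Theorem proposition1p4 (R : realType) (n : nat) (eps : R) (V : R -> R)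
  (W : 'I_n -> 'I_n -> R) :
  0 < eps ->
  continuous V ->
  (forall t, 0 <= V t) ->
  (forall i j, 0 <= W i j) ->
  (* liminf inequality *)
  (forall (u : 'I_n -> R) (up : R -> 'I_n -> R),
     (forall i, (fun p => up p i) @ +oo --> u i) ->
     ((Ginf eps V W u)%:E <=
        limf_einf (fun p => (Gp eps V W p (up p))%:E) (pinfty_nbhs R))%E) /\
  (* recovery sequence *)
  (forall (u : 'I_n -> R), exists up : R -> 'I_n -> R,
     (forall i, (fun p => up p i) @ +oo --> u i) /\
     (limf_esup (fun p => (Gp eps V W p (up p))%:E) (pinfty_nbhs R) <=
        (Ginf eps V W u)%:E)%E).
Proof.
move=> eps0 Vc V0 W0.
have epsV0 : 0 <= eps^-1 by rewrite invr_ge0 ltW.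
split.
- move=> u up hup.
  have key : forall r : \bar R, (0%:E <= r)%E ->
      (forall i j, ((W i j * `|u i - u j|)%:E <= r)%E) ->
      (forall i, ((eps^-1 * V (u i))%:E <= r)%E) ->
      ((Ginf eps V W u)%:E <= r)%E.
    case=> [r| |] // r0 hij hi; last by rewrite leey.
    move: r0; rewrite lee_fin => r0.
    rewrite lee_fin /Ginf ge_max; apply/andP; split.
      apply: bigmax_le => // i _; apply: bigmax_le => // j _; by rewrite -lee_fin.
    have hb : \big[Num.max/0]_(i < n) V (u i) <= eps * r.
      apply: bigmax_le => [|i _]; first by apply: mulr_ge0 => //; exact: ltW.
      rewrite -[V (u i)](mulVKf (lt0r_neq0 eps0)); apply: ler_wpM2l; first exact: ltW.
      by rewrite -lee_fin.
    apply: le_trans (ler_wpM2l epsV0 hb) _.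
    by rewrite mulKf ?gt_eqF.
  apply: key.
  - apply: (@liminf_ge _ _ (fun=> 0)); first exact: cvg_cst.
    by apply: nearW => p; exact: powR_ge0.
  - move=> i j.
    have n0 : (0 < n)%N by apply: leq_ltn_trans (leq0n i) (ltn_ord i).
    have c0 : 0 < (eps * n%:R ^+ 2)^-1.
      by rewrite invr_gt0 mulr_gt0 // exprn_gt0 // ltr0n.
    rewrite -[W i j * _]mul1r.
    apply: (@liminf_ge _ _ (fun p => (eps * n%:R ^+ 2)^-1 `^ p^-1 *
                                     (W i j * `|up p i - up p j|))).
      apply: cvgM; first exact: powR_inv_cvg1.
      apply: cvgM; first exact: cvg_cst.
      by apply: cvg_norm; apply: cvgB; exact: hup.
    near=> p.
    have p0 : 0 < p by near: p; apply: nbhs_pinfty_gt; rewrite num_real.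
    rewrite /Gp; apply: powR_lb; [exact: p0 | exact: ltW c0 | by apply: mulr_ge0 |].
    apply: (@le_trans _ _ ((eps * n%:R ^+ 2)^-1 * \sum_(i0 < n) \sum_(j0 < n)
        (W i0 j0 `^ p * `|up p i0 - up p j0| `^ p))).
      apply: ler_wpM2l; first exact: ltW.
      rewrite powRM //.
      apply: le_trans _ (sum_ge_term (fun i0 => \sum_(j0 < n)
        (W i0 j0 `^ p * `|up p i0 - up p j0| `^ p)) i _).
        apply: (sum_ge_term (fun j0 => W i j0 `^ p * `|up p i - up p j0| `^ p)).
        by move=> k; apply: mulr_ge0; exact: powR_ge0.
      move=> k; apply: sumr_ge0 => k' _; apply: mulr_ge0; exact: powR_ge0.
    rewrite lerDl; apply: mulr_ge0.
      by rewrite invr_ge0 mulr_ge0 ?powR_ge0 ?ler0n.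
    by apply: sumr_ge0 => k _; exact: powR_ge0.
  - move=> i.
    have n0 : (0 < n)%N by apply: leq_ltn_trans (leq0n i) (ltn_ord i).
    have c0 : 0 < (n%:R : R)^-1 by rewrite invr_gt0 ltr0n.
    rewrite -[eps^-1 * _]mul1r.
    apply: (@liminf_ge _ _ (fun p => (n%:R : R)^-1 `^ p^-1 *
                                     (eps^-1 * V (up p i)))).
      apply: cvgM; first exact: powR_inv_cvg1.
      apply: cvgM; first exact: cvg_cst.
      exact: (cvg_comp _ _ (hup i) (Vc (u i))).
    near=> p.
    have p0 : 0 < p by near: p; apply: nbhs_pinfty_gt; rewrite num_real.
    rewrite /Gp; apply: powR_lb; [exact: p0 | exact: ltW c0 | by apply: mulr_ge0 |].
    rewrite powRM // powRVl //.
    have -> : n%:R^-1 * ((eps `^ p)^-1 * V (up p i) `^ p) =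
              (eps `^ p * n%:R)^-1 * V (up p i) `^ p.
      by rewrite invfM mulrA [_ * (eps `^ p)^-1]mulrC.
    apply: ler_wpDl.
      apply: mulr_ge0.
        by rewrite invr_ge0; apply: mulr_ge0; [exact: ltW | exact: exprn_ge0 (ler0n _ _)].
      apply: sumr_ge0 => k _; apply: sumr_ge0 => k' _; apply: mulr_ge0; exact: powR_ge0.
    apply: ler_wpM2l.
      by rewrite invr_ge0 mulr_ge0 ?powR_ge0 ?ler0n.
    apply: (sum_ge_term (fun k => V (up p k) `^ p)) => k; exact: powR_ge0.
- move=> u; exists (fun _ => u); split; first by move=> i; exact: cvg_cst.
  set M := Ginf eps V W u.
  have M0 : 0 <= M by rewrite /M /Ginf le_max bigmax_ge_id.
  have hW : forall i j, W i j * `|u i - u j| <= M.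
    move=> i j; rewrite /M /Ginf le_max; apply/orP; left.
    apply: le_trans (le_bigmax _ _ i); exact: (le_bigmax _ _ j).
  have hV : forall i, V (u i) <= eps * M.
    move=> i; rewrite -[V (u i)](mulVKf (lt0r_neq0 eps0)); apply: ler_wpM2l; first exact: ltW.
    rewrite /M /Ginf le_max; apply/orP; right.
    apply: ler_wpM2l => //; exact: (le_bigmax _ _ i).
  have e : forall x : R, \sum_(i < n) x = x *+ n by move=> x; rewrite sumr_const card_ord.
  apply: (@limsup_le _ _ (fun p => (eps^-1 + 1) `^ p^-1 * M)).
    rewrite -[X in _ --> X]mul1r; apply: cvgM; last exact: cvg_cst.
    by apply: powR_inv_cvg1; rewrite ltr_wpDl.
  near=> p.
  have p0 : 0 < p by near: p; apply: nbhs_pinfty_gt; rewrite num_real.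
  rewrite /Gp; apply: powR_ub => //.
  - by rewrite addr_ge0.
  - apply: addr_ge0; apply: mulr_ge0.
    + by rewrite invr_ge0; apply: mulr_ge0; [exact: ltW | exact: exprn_ge0 (ler0n _ _)].
    + apply: sumr_ge0 => k _; apply: sumr_ge0 => k' _; apply: mulr_ge0; exact: powR_ge0.
    + by rewrite invr_ge0 mulr_ge0 ?powR_ge0 ?ler0n.
    + by apply: sumr_ge0 => k _; exact: powR_ge0.
  rewrite mulrDl mul1r; apply: lerD.
  + apply: le_trans (aux1 n eps0 (powR_ge0 M p)).
    apply: ler_wpM2l; first by rewrite invr_ge0; apply: mulr_ge0; [exact: ltW | exact: exprn_ge0 (ler0n _ _)].
    rewrite -!e; apply: ler_sum => i _; apply: ler_sum => j _.
    rewrite -powRM ?normr_ge0 //; apply: ge0_ler_powR; first exact: ltW.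
    + by rewrite nnegrE mulr_ge0.
    + by rewrite nnegrE.
    + exact: hW.
  + apply: le_trans (aux2 n (powR_gt0 p eps0) (powR_ge0 M p)).
    apply: ler_wpM2l; first by rewrite invr_ge0 mulr_ge0 ?powR_ge0 ?ler0n.
    rewrite -e; apply: ler_sum => i _.
    rewrite -powRM; [|exact: ltW|exact: M0]; apply: ge0_ler_powR; first exact: ltW.
    + by rewrite nnegrE.
    + by rewrite nnegrE; apply: mulr_ge0 => //; exact: ltW.
    + exact: hV.
Unshelve. all: by end_near.
Qed.
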